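(* For any language $L\subseteq\Sigma^+$: $L\in\mathtt{incl}$-$\mathtt{ESO}$-$\mathtt{HORN}$ if and only if $(\Sigma^+\setminus L)\in LinConj$.
   Context: Fix a finite alphabet $\Sigma$. A nonempty word $w=w_1\cdots w_n$ is represented by the structure $\langle w\rangle=([1,n];(Q_s)_{s\in\Sigma},\mathtt{min},\mathtt{max},\mathtt{suc},\mathtt{pred})$ with $Q_s(i)\iff w_i=s$, $\mathtt{min}(i)\iff i=1$, $\mathtt{max}(i)\iff i=n$, $\mathtt{suc}(i)=\min(i+1,n)$, $\mathtt{pred}(i)=\max(i-1,1)$. For an integer $a$, $x+a$ denotes $\mathtt{suc}^a(x)$ if $a\ge0$ and $\mathtt{pred}^{-a}(x)$ if $a<0$; $y-b=\mathtt{pred}^b(y)$. An inclusion Horn formula is $\Phi=\exists\mathbf{R}\forall x\forall y\,\psi(x,y)$, $\mathbf{R}$ a finite set of binary relation symbols, $\psi$ a conjunction of Horn clauses over the signature $\{(Q_s)_{s\in\Sigma},\mathtt{min},\mathtt{max},\mathtt{suc},\mathtt{pred}\}\cup\mathbf{R}\cup\{=,\le,<\}$ (with the usual order on $[1,n]$), each of the form $x\le y\wedge\delta_1\wedge\cdots\wedge\delta_r\to\delta_0$ with $\delta_0$ an atom $R(x,y)$ ($R\in\mathbf{R}$) or $\bot$, and each $\delta_i$ one of: $U(x+a)$, $\neg U(x+a)$, $U(y+a)$, $\neg U(y+a)$ for $U\in\{(Q_s)_{s\in\Sigma},\mathtt{min},\mathtt{max}\}$ and $a\in\mathbb Z$;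 $x=y$ or $x<y$; a conjunction $S(x+a,y-b)\wedge x+a\le y-b$ with $S\in\mathbf{R}$ and integers $a,b\ge0$. $\mathtt{incl}$-$\mathtt{ESO}$-$\mathtt{HORN}$ is the class of languages $\{w\in\Sigma^+:\langle w\rangle\models\Phi\}$ for such $\Phi$. A linear conjunctive grammar is $G=(\Sigma,N,P,S)$ with nonterminals $N$, start symbol $S\in N$ and a finite set $P$ of rules $A\to\alpha_1\&\cdots\&\alpha_k$ ($k\ge1$) with each $\alpha_i\in\Sigma^*\cup\Sigma^*N\Sigma^*$. The languages $(L(A))_{A\in N}$ are the least (componentwise for inclusion) solution of the system $L(A)=\bigcup_{(A\to\alpha_1\&\cdots\&\alpha_k)\in P}\bigcap_{i=1}^kL(\alpha_i)$, where $L(uBv)=u\,L(B)\,v$ and $L(u)=\{u\}$ for $u,v\in\Sigma^*$, $B\in N$. $L(G)=L(S)$, and $LinConj$ is the class of languages generated by linear conjunctive grammars. *)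

(* Defs.v *)
From Stdlib Require List.
From mathcomp Require Import all_boot all_algebra.
Set Implicit Arguments. Unset Strict Implicit. Unset Printing Implicit Defensive.

(* positions of <w> are the naturals 1..n with n = size w *)
Definition suc (n i : nat) : nat := minn i.+1 n.
Definition pred_pos (i : nat) : nat := maxn i.-1 1.

(* x + a, for a : int :  suc^a(x) if a >= 0, pred^(-a)(x) if a < 0 *)
Definition shift (n : nat) (i : nat) (a : int) : nat :=
  match a with
  | Posz k => iter k (suc n) i
  | Negz k => iter k.+1 pred_pos i
  end.

Definition shiftdown (i b : nat) : nat := iter b pred_pos i.

Inductive unary (Sigma : Type) := UQ (s : Sigma) | Umin | Umax.

Definition unary_sem (Sigma : finType) (w : seq Sigma) (U : unary Sigma) (i : nat) : bool :=
  match U with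
  | UQ s => onth w i.-1 == Some s       (* w_i = s  (positions are 1-based) *)
  | Umin => i == 1
  | Umax => i == size w
  end.

Inductive var := VX | VY.

Inductive hlit (Sigma R : Type) :=
  | LUn (positive : bool) (U : unary Sigma) (v : var) (a : int)
  | LEq
  | LLt
  | LRel (Sr : R) (a b : nat).             (* S(x+a, y-b) /\ x+a <= y-b *)

(* a Horn clause  x <= y /\ delta_1 /\ ... /\ delta_r -> delta_0,
   head = Some R for R(x,y), None for bottom *)
Record hclause (Sigma R : Type) := HClause {
  hc_head : option R;
  hc_body : seq (hlit Sigma R) }.

Section HornSem.
Variables (Sigma : finType) (R : Type).
Variable (w : seq Sigma).
Variable (I : R -> nat -> nat -> Prop).

Definition hlit_sem (x y : nat) (l : hlit Sigma R) : Prop :=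
  let n := size w in
  match l with
  | LUn pos U v a =>
      let p := shift n (if v is VX then x else y) a in
      if pos then unary_sem w U p else ~~ unary_sem w U p
  | LEq => x = y
  | LLt => x < y
  | LRel Sr a b => I Sr (shift n x (Posz a)) (shiftdown y b)
                  /\ shift n x (Posz a) <= shiftdown y b
  end.

Definition hclause_sem (c : hclause Sigma R) : Prop :=
  forall x y : nat, 1 <= x <= size w -> 1 <= y <= size w ->
    x <= y ->
    (forall l, List.In l (hc_body c) -> hlit_sem x y l) ->
    match hc_head c with
    | Some Sr => I Sr x y
    | None => False
    end.
End HornSem.

Definition horn_models (Sigma : finType) (R : Type)
    (phi : seq (hclause Sigma R)) (w : seq Sigma) : Prop :=
  exists I : R -> nat -> nat -> Prop,
    forall c, List.In c phi -> hclause_sem w I c.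

Definition incl_ESO_HORN (Sigma : finType) (L : seq Sigma -> Prop) : Prop :=
  exists (R : finType) (phi : seq (hclause Sigma R)),
    forall w, L w <-> (w <> [::] /\ horn_models phi w).

Inductive lconj (Sigma N : Type) :=
  | CTerm (u : seq Sigma)
  | CNT (u : seq Sigma) (B : N) (v : seq Sigma).

(* a rule  A -> alpha_1 & ... & alpha_k  with k >= 1:
   (A, alpha_1, [alpha_2; ...; alpha_k]) *)
Definition lrule (Sigma N : Type) : Type := (N * lconj Sigma N * seq (lconj Sigma N))%type.

(* least solution of the language equation system, as an inductive
   (least fixed point) definition: gen P A w  <->  w \in L(A) *)
Inductive gen (Sigma : Type) (N : Type) (P : seq (lrule Sigma N)) : N -> seq Sigma -> Prop :=
  | gen_rule (A : N) (c0 : lconj Sigma N) (cs : seq (lconj Sigma N)) (w : seq Sigma) :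
      List.In (A, c0, cs) P ->
      (forall u, List.In (CTerm N u) (c0 :: cs) -> w = u) ->
      (forall u B v, List.In (CNT u B v) (c0 :: cs) ->
         exists w', w = u ++ w' ++ v /\ gen P B w') ->
      gen P A w.

Definition LinConj (Sigma : finType) (L : seq Sigma -> Prop) : Prop :=
  exists (N : finType) (P : seq (lrule Sigma N)) (S : N),
    forall w, L w <-> gen P S w.

(* Main.v *)
Require Import Defs.
From Stdlib Require Import ZArith Lia Classical ClassicalEpsilon.
From mathcomp Require Import all_boot all_algebra zify.
Require Import Defs.
Set Implicit Arguments. Unset Strict Implicit. Unset Printing Implicit Defensive.
Delimit Scope Z_scope with Z.

Section GI.
Variables (Sigma N : Type) (P : seq (lrule Sigma N)).
Variable Q : N -> seq Sigma -> Prop.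
Hypothesis H : forall A c0 cs w, List.In (A,c0,cs) P ->
  (forall u, List.In (CTerm N u) (c0 :: cs) -> w = u) ->
  (forall u B v, List.In (CNT u B v) (c0 :: cs) -> exists w', w = u ++ w' ++ v /\ gen P B w' /\ Q B w') -> Q A w.
Fixpoint gen_ind2 A w (g : gen P A w) {struct g} : Q A w :=
  match g with gen_rule A c0 cs w Hin Ht Hn => H Hin Ht (fun u B v Hi =>
     match Hn u B v Hi with ex_intro w' (conj e g') => ex_intro _ w' (conj e (conj g' (gen_ind2 g'))) end) end.
End GI.

Lemma In_cat (T : Type) (a : T) s1 s2 : List.In a (s1 ++ s2) <-> List.In a s1 \/ List.In a s2.
Proof. elim: s1 => [|b s1 IH] /=; first by tauto. rewrite IH; tauto. Qed.

Lemma In_map (T U : Type) (f : T -> U) (b : U) s : List.In b (map f s) <-> exists a, List.In a s /\ b = f a.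
Proof.
elim: s => [|a s IH] /=; first by split => // [[a []]].
split.
- case=> [<-|h]; first by exists a; auto.
  have [a' [h1 ->]] := proj1 IH h. by exists a'; auto.
- case=> a' [[<-|h] e]; first by left; rewrite e. by right; apply: (proj2 IH); exists a'.
Qed.

Lemma In_flatten (T : Type) (a : T) ss : List.In a (flatten ss) <-> exists s, List.In s ss /\ List.In a s.
Proof.
elim: ss => [|s ss IH] /=; first by split => // [[s []]].
rewrite In_cat IH; split.
- case=> [h|[s' [h1 h2]]]; first by exists s; auto. by exists s'; auto.
- case=> s' [[e|h1] h2]; first by left; rewrite e. by right; exists s'.
Qed.

Lemma In_iota a m n : List.In a (iota m n) <-> m <= a < m + n.
Proof.
elim: n m => [|n IH] m /=; first by split => //; lia.
rewrite IH; split; [case; lia|]. move=> h; case: (a =P m) => [->|ne]; [by left|right; lia].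
Qed.

Definition negof (j : nat) : int := if j is j'.+1 then Negz j' else Posz 0.

Section Slices.
Variable Sigma : Type.
Implicit Types w z u v : seq Sigma.

Definition slice w x y := take (y.+1 - x) (drop x.-1 w).

Lemma onth_take (s : seq Sigma) k i : onth (take k s) i = if i < k then onth s i else None.
Proof.
rewrite !onthE map_take; case: ifP => h; first by rewrite nth_take.
rewrite nth_default // size_take size_map; case: ifP; lia.
Qed.

Lemma onth_drop (s : seq Sigma) k i : onth (drop k s) i = onth s (k + i).
Proof. by rewrite !onthE map_drop nth_drop. Qed.

Lemma onth_slice w x y i : 1 <= x ->
  onth (slice w x y) i = if i < y.+1 - x then onth w (x.-1 + i) else None.
Proof. by move=> hx; rewrite /slice onth_take onth_drop. Qed.

Lemma slice_cat w x m y : 1 <= x -> x <= m.+1 -> m <= y ->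
  slice w x y = slice w x m ++ slice w m.+1 y.
Proof.
move=> h1 h2 h3; rewrite /slice.
have -> : y.+1 - x = (m.+1 - x) + (y.+1 - m.+1) by lia.
rewrite takeD drop_drop. have -> : m.+1 - x + x.-1 = m.+1.-1 by lia. by [].
Qed.

Lemma size_slice w x y : 1 <= x -> x <= y.+1 -> y <= size w -> size (slice w x y) = y.+1 - x.
Proof. move=> *; rewrite /slice size_take size_drop; case: ifP; lia. Qed.

Lemma slice_full w : slice w 1 (size w) = w.
Proof. by rewrite /slice subn1 /= drop0 take_size. Qed.

Lemma slice_chars w u x : 1 <= x ->
  (forall i, i < size u -> onth w (x.-1 + i) = onth u i) -> slice w x (x + size u).-1 = u.
Proof.
move=> hx h; apply: eq_from_onth => i; rewrite onth_slice //.
case: ifP => hi; first by apply: h; lia.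
rewrite onth_default //; lia.
Qed.

Lemma slice_onth w x y i : 1 <= x -> i < y.+1 - x -> onth (slice w x y) i = onth w (x.-1 + i).
Proof. by move=> hx hi; rewrite onth_slice // hi. Qed.

End Slices.

Lemma iter_suc n k i : 1 <= i <= n -> iter k (suc n) i = minn (i + k) n.
Proof.
move=> h; elim: k => [|k IH] /=; first by rewrite addn0; lia.
rewrite IH /suc; lia.
Qed.

Lemma iter_pred k i : 1 <= i -> iter k pred_pos i = maxn (i - k) 1.
Proof. move=> h; elim: k => [|k IH] /=; first by rewrite subn0; lia. rewrite IH /pred_pos; lia. Qed.

Lemma shiftP n x k : 1 <= x <= n -> shift n x (Posz k) = minn (x + k) n.
Proof. exact: iter_suc. Qed.

Lemma shiftN n y j : 1 <= y -> shift n y (negof j) = maxn (y - j) 1.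
Proof. move=> h; case: j => [|j]; first by rewrite /= subn0; lia. exact: (iter_pred j.+1 h). Qed.

Lemma shiftdownP y b : 1 <= y -> shiftdown y b = maxn (y - b) 1.
Proof. exact: iter_pred. Qed.

Lemma cat_eq_l (T : eqType) (s1 s2 s3 s4 : seq T) : size s1 = size s2 -> s1 ++ s3 = s2 ++ s4 -> s1 = s2 /\ s3 = s4.
Proof. by move=> hs /eqP; rewrite eqseq_cat // => /andP [/eqP -> /eqP ->]. Qed.

Lemma cat_eq_r (T : eqType) (s1 s2 s3 : seq T) : s1 ++ s3 = s2 ++ s3 -> s1 = s2.
Proof.
move=> e; have hs : size s1 = size s2 by move: (congr1 size e); rewrite !size_cat; lia.
by case: (cat_eq_l hs e).
Qed.

Lemma In_pmap (T U : Type) (f : T -> option U) b s :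
  List.In b (pmap f s) <-> exists a, List.In a s /\ f a = Some b.
Proof.
elim: s => [|a s IH] /=; first by split => // -[a []].
case e: (f a) => [b'|] /=; rewrite IH; split.
- case=> [<-|[a' [h1 h2]]]; [by exists a; auto|by exists a'; auto].
- case=> a' [[<-|h1] h2]; [left; congruence|right; by exists a'].
- case=> a' [h1 h2]; by exists a'; auto.
- case=> a' [[<-|h1] h2]; [congruence|by exists a'].
Qed.

Lemma all_In (T : Type) (p : pred T) s : all p s <-> forall a, List.In a s -> p a.
Proof.
elim: s => [|a s IH] //=; split.
- by move=> /andP [h1 h2] b [<-|hb] //; apply: (proj1 IH h2).
- move=> h; apply/andP; split; first by apply: h; left.
  by apply: (proj2 IH) => b hb; apply: h; right.
Qed.

Lemma In_mem (T : eqType) (a : T) s : a \in s -> List.In a s.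
Proof. elim: s => [|b s IH] //=; rewrite inE => /orP [/eqP ->|h]; [by left|right; exact: IH]. Qed.

Lemma In_zip_iota (T : Type) (u : seq T) m p :
  List.In p (zip (iota m (size u)) u) <-> m <= p.1 /\ onth u (p.1 - m) = Some p.2.
Proof.
elim: u m => [|a u IH] m /=; first by split => // -[_]; rewrite onth0n.
move: IH; case: p => i s IH.
rewrite IH /=; split.
- case=> [[<- <-]|[h1 h2]]; first by rewrite subnn.
  split; first lia. have -> : i - m = (i - m.+1).+1 by lia. by [].
- case=> h1 h2; case: (i =P m) => [ei|ne].
  + by left; move: h2; rewrite ei subnn => -[->].
  + right; split; first lia. by move: h2; have -> : i - m = (i - m.+1).+1 by lia.
Qed.

Lemma le_foldr_max (T : Type) (f : T -> nat) a s : List.In a s -> f a <= foldr maxn 0 (map f s).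
Proof. elim: s => [|b s IH] //= [->|h]; [lia| have := IH h; lia]. Qed.

Section Prod.
Variable L : Type.
Fixpoint prodb (ls : seq (seq (seq L))) : seq (seq L) :=
  match ls with
  | [::] => [:: [::]]
  | a :: r => flatten (map (fun b => map (fun bs => b ++ bs) (prodb r)) a)
  end.

Lemma prodb_sound (Q : L -> Prop) ls body : List.In body (prodb ls) ->
  (forall l, List.In l body -> Q l) ->
  forall a, List.In a ls -> exists b, List.In b a /\ forall l, List.In l b -> Q l.
Proof.
elim: ls body => [|a0 ls IH] body //=.
move=> /In_flatten [s [/In_map [b [hb ->]] /In_map [bs [hbs ->]]]] hQ a [<-|ha].
- exists b; split => // l hl; apply: hQ; apply/In_cat; by left.
- apply: (IH bs hbs) => // l hl; apply: hQ; apply/In_cat; by right.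
Qed.

Lemma prodb_complete (Q : L -> Prop) ls :
  (forall a, List.In a ls -> exists b, List.In b a /\ forall l, List.In l b -> Q l) ->
  exists body, List.In body (prodb ls) /\ forall l, List.In l body -> Q l.
Proof.
elim: ls => [|a0 ls IH] /= h; first by exists [::]; split; [left|].
have [b [hb hbQ]] := h a0 (or_introl erefl).
have [bs [hbs hbsQ]] := IH (fun a ha => h a (or_intror ha)).
exists (b ++ bs); split.
- apply/In_flatten; exists (map (fun bs => b ++ bs) (prodb ls)); split; first by apply/In_map; exists b.
  by apply/In_map; exists bs.
- by move=> l /In_cat [] ?; [apply: hbQ|apply: hbsQ].
Qed.
End Prod.

Section Dir2.
Variables (Sigma N : finType) (P : seq (lrule Sigma N)) (S : N) (eps : N -> bool).
Hypothesis Heps : forall B, eps B <-> gen P B [::].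

Definition conj_len (c : lconj Sigma N) :=
  match c with CTerm u => size u | CNT u _ v => size u + size v end.
Definition rule_len (r : lrule Sigma N) := foldr maxn 0 (map conj_len (r.1.2 :: r.2)).
Definition KK := foldr maxn 0 (map rule_len P).

Lemma K_bound A c0 cs c : List.In (A,c0,cs) P -> List.In c (c0::cs) -> conj_len c <= KK.
Proof.
move=> h1 h2; apply: leq_trans (le_foldr_max rule_len h1).
exact: (le_foldr_max conj_len h2).
Qed.

Definition RT := (N + 'I_KK.+1)%type.
Definition LenR k : RT := inr (inord k).
Notation HL := (hlit Sigma RT).

Definition uchars (u : seq Sigma) : seq HL :=
  [seq LUn _ true (UQ p.2) VX (Posz p.1) | p <- zip (iota 0 (size u)) u].
Definition vchars (v : seq Sigma) : seq HL :=
  [seq LUn _ true (UQ p.2) VY (negof ((size v).-1 - p.1)) | p <- zip (iota 0 (size v)) v].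
Definition notmax (u : seq Sigma) : seq HL := [seq LUn _ false (Umax _) VX (Posz i) | i <- iota 0 (size u)].
Definition notmin (v : seq Sigma) : seq HL := [seq LUn _ false (Umin _) VY (negof j) | j <- iota 0 (size v)].

Definition exact (u : seq Sigma) : seq HL := LRel _ (LenR (size u).-1) 0 0 :: uchars u.
Definition mid u B v : seq HL :=
  LRel _ (inl B) (size u) (size v) :: notmax u ++ notmin v ++ uchars u ++ vchars v.

Definition alts (c : lconj Sigma N) : seq (seq HL) :=
  match c with
  | CTerm u => if u is [::] then [::] else [:: exact u]
  | CNT u B v => mid u B v :: (if eps B && (size (u ++ v) != 0) then [:: exact (u ++ v)] else [::])
  end.

Definition phi2 : seq (hclause Sigma RT) :=
  HClause (Some (LenR 0)) [:: LEq _ _] ::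
  HClause None [:: LUn _ true (Umin _) VX (Posz 0); LUn _ true (Umax _) VY (Posz 0); LRel _ (inl S) 0 0] ::
  [seq HClause (Some (LenR k.+1)) [:: LLt _ _; LRel _ (LenR k) 1 0] | k <- iota 0 KK] ++
  flatten [seq [seq HClause (Some (inl r.1.1)) b | b <- prodb (map alts (r.1.2 :: r.2))] | r <- P].

Variable w : seq Sigma.
Notation n := (size w).
Definition bodyOK (I : RT -> nat -> nat -> Prop) x y (b : seq HL) :=
  forall l, List.In l b -> hlit_sem w I x y l.

Definition Isem (r : RT) x y : Prop :=
  match r with inl A => gen P A (slice w x y) | inr k => y = x + k end.

Lemma uchars_ok I x y u : 1 <= x -> x + size u <= n.+1 -> slice w x (x + size u).-1 = u ->
  bodyOK I x y (uchars u).
Proof.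
move=> h1 h2 hs l /In_map [[i s] [/In_zip_iota [_ /= hi] ->]] /=.
have {}hi : onth u i = Some s by rewrite -hi subn0.
have hiu : i < size u by rewrite -onthTE hi.
rewrite /hlit_sem /= iter_suc; last lia. have -> : minn (x + i) n = x + i by lia.
rewrite -hs slice_onth in hi; [|lia|lia].
apply/eqP; rewrite -hi; congr onth; lia.
Qed.

Lemma uchars_sound I x y u : 1 <= x -> x + size u <= n.+1 -> bodyOK I x y (uchars u) ->
  slice w x (x + size u).-1 = u.
Proof.
move=> h1 h2 hb; apply: slice_chars => // i hi.
have [s hs] : exists s, onth u i = Some s.
  by move: hi; rewrite -onthTE; case: (onth u i) => [s|]; [exists s|].
have := hb (LUn _ true (UQ s) VX (Posz i)).
rewrite /hlit_sem /= iter_suc; last lia. have -> : minn (x + i) n = x + i by lia.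
move=> h; rewrite hs; move: h => /(_ _)/eqP <-.
  congr onth; lia.
by apply/In_map; exists (i, s); split => //; apply/In_zip_iota; rewrite /= subn0.
Qed.


Lemma vchars_ok I x y v : 1 <= y <= n -> size v <= y -> slice w (y.+1 - size v) y = v ->
  bodyOK I x y (vchars v).
Proof.
move=> h1 h2 hs l /In_map [[j s] [/In_zip_iota [_ /= hi] ->]].
have {}hi : onth v j = Some s by rewrite -hi subn0.
have hjv : j < size v by rewrite -onthTE hi.
rewrite /hlit_sem shiftN; last lia.
rewrite -hs slice_onth in hi; [|lia|lia].
rewrite /unary_sem; apply/eqP; rewrite -hi; congr onth; lia.
Qed.

Lemma vchars_sound I x y v : 1 <= y <= n -> size v <= y -> bodyOK I x y (vchars v) ->
  slice w (y.+1 - size v) y = v.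
Proof.
move=> h1 h2 hb.
have -> : y = (y.+1 - size v + size v).-1 by lia.
have -> : (y.+1 - size v + size v).-1.+1 - size v = y.+1 - size v by lia.
apply: slice_chars; first lia. move=> j hj.
have [s hs] : exists s, onth v j = Some s.
  by move: hj; rewrite -onthTE; case: (onth v j) => [s|]; [exists s|].
have := hb (LUn _ true (UQ s) VY (negof ((size v).-1 - j))).
rewrite /hlit_sem shiftN; last lia.
move=> h; rewrite hs; move: h => /(_ _)/eqP <-.
  congr onth; lia.
by apply/In_map; exists (j, s); split => //; apply/In_zip_iota; rewrite /= subn0.
Qed.

Lemma notmax_ok I x y u : 1 <= x -> x + size u <= n -> bodyOK I x y (notmax u).
Proof.
move=> h0 h l /In_map [i [/In_iota hi ->]]; rewrite /hlit_sem /= iter_suc; last lia.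
apply/eqP; lia.
Qed.

Lemma notmax_sound I x y u : 1 <= x <= n -> bodyOK I x y (notmax u) -> x + size u <= n.
Proof.
move=> h hb; case: (size u =P 0) => [->|ne]; first lia.
have hin : List.In (LUn _ false (Umax _) VX (Posz (size u).-1)) (notmax u).
  by apply/In_map; exists (size u).-1; split => //; apply/In_iota; lia.
have := hb _ hin; rewrite /hlit_sem /= iter_suc; last lia.
move=> h'; lia.
Qed.

Lemma notmin_ok I x y v : size v < y -> bodyOK I x y (notmin v).
Proof.
move=> h l /In_map [j [/In_iota hj ->]]; rewrite /hlit_sem shiftN; last lia.
rewrite /unary_sem; apply/eqP; lia.
Qed.

Lemma notmin_sound I x y v : 1 <= y -> bodyOK I x y (notmin v) -> size v < y.
Proof.
move=> h hb; case: (size v =P 0) => [->|ne]; first lia.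
have hin : List.In (LUn _ false (Umin _) VY (negof (size v).-1)) (notmin v).
  by apply/In_map; exists (size v).-1; split => //; apply/In_iota; lia.
have := hb _ hin; rewrite /hlit_sem shiftN; last lia.
rewrite /unary_sem => h'; lia.
Qed.

Lemma slice3 x y u m v : 1 <= x <= y -> y <= n -> slice w x y = u ++ m ++ v -> 0 < size m ->
  [/\ x + size u <= y - size v, size v < y, slice w x (x + size u).-1 = u,
      slice w (x + size u) (y - size v) = m & slice w (y - size v).+1 y = v].
Proof.
move=> h1 h2 hs hm.
have hsz := size_slice (w:=w) (x:=x) (y:=y) (proj1 (andP h1)) ltac:(lia) h2.
rewrite hs !size_cat in hsz.
have e1 := @slice_cat _ w x (x + size u).-1 y ltac:(lia) ltac:(lia) ltac:(lia).
have e2 := @slice_cat _ w (x + size u) (y - size v) y ltac:(lia) ltac:(lia) ltac:(lia).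
rewrite (_ : (x + size u).-1.+1 = x + size u) in e1; last lia.
rewrite e2 hs in e1.
have s1 : size (slice w x (x + size u).-1) = size u by rewrite size_slice; lia.
have s2 : size (slice w (x + size u) (y - size v)) = size m by rewrite size_slice; lia.
have [eu e1'] := cat_eq_l (esym s1) e1.
have [em ev] := cat_eq_l (esym s2) e1'.
split; [lia|lia|by []|by []|by []].
Qed.

Lemma exact_sound x y u : 1 <= x <= y -> y <= n -> 0 < size u -> (size u).-1 <= KK ->
  bodyOK Isem x y (exact u) -> slice w x y = u.
Proof.
move=> h1 h2 hu hK hb.
have := hb _ (or_introl erefl); rewrite /hlit_sem /= => -[e _].
rewrite inordK in e; last lia.
have -> : y = (x + size u).-1 by lia.
apply: (uchars_sound (I := Isem) (y := y)); [lia|lia|].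
by move=> l hl; apply: hb; right.
Qed.

Lemma exact_ok (I : RT -> nat -> nat -> Prop) x y u :
  (forall k x, k <= KK -> 1 <= x -> x + k <= n -> I (LenR k) x (x + k)) ->
  1 <= x <= y -> y <= n -> slice w x y = u -> (size u).-1 <= KK -> bodyOK I x y (exact u).
Proof.
move=> HLen h1 h2 hs hK.
have hsz := size_slice (w:=w) (x:=x) (y:=y) (proj1 (andP h1)) ltac:(lia) h2.
rewrite hs in hsz.
move=> l [<-|hl].
- rewrite /hlit_sem /=; split; last lia.
  have -> : y = x + (size u).-1 by lia.
  apply: HLen; lia.
- apply: (uchars_ok I y) hl; [lia|lia|]. have -> : (x + size u).-1 = y by lia. by [].
Qed.

Lemma mid_sound x y u B v : 1 <= x <= y -> y <= n -> bodyOK Isem x y (mid u B v) ->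
  exists m, slice w x y = u ++ m ++ v /\ gen P B m.
Proof.
move=> h1 h2 hb.
have hbu : bodyOK Isem x y (notmax u) by move=> l hl; apply: hb; right; apply/In_cat; left.
have hbv : bodyOK Isem x y (notmin v).
  by move=> l hl; apply: hb; right; apply/In_cat; right; apply/In_cat; left.
have huc : bodyOK Isem x y (uchars u).
  by move=> l hl; apply: hb; right; apply/In_cat; right; apply/In_cat; right; apply/In_cat; left.
have hvc : bodyOK Isem x y (vchars v).
  by move=> l hl; apply: hb; right; apply/In_cat; right; apply/In_cat; right; apply/In_cat; right.
have hu : x + size u <= n by apply: notmax_sound hbu; lia.
have hv : size v < y by apply: notmin_sound hbv; lia.
have := hb _ (or_introl erefl); rewrite /hlit_sem /= iter_suc; last lia.
rewrite shiftdownP; last lia.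
have -> : minn (x + size u) n = x + size u by lia.
have -> : maxn (y - size v) 1 = y - size v by lia.
move=> [hg hle].
exists (slice w (x + size u) (y - size v)); split => //.
have e1 := @slice_cat _ w x (x + size u).-1 y ltac:(lia) ltac:(lia) ltac:(lia).
have e2 := @slice_cat _ w (x + size u) (y - size v) y ltac:(lia) ltac:(lia) ltac:(lia).
rewrite (_ : (x + size u).-1.+1 = x + size u) in e1; last lia.
rewrite e1 e2 (uchars_sound _ _ huc); [|lia|lia].
have -> : (y - size v).+1 = y.+1 - size v by lia.
by rewrite (vchars_sound _ _ hvc); [|lia|lia].
Qed.

Lemma mid_ok (I : RT -> nat -> nat -> Prop) x y u m B v : 1 <= x <= y -> y <= n ->
  slice w x y = u ++ m ++ v -> 0 < size m -> I (inl B) (x + size u) (y - size v) ->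
  bodyOK I x y (mid u B v).
Proof.
move=> h1 h2 hs hm hI.
have [ha hb hu hmm hv] := slice3 h1 h2 hs hm.
move=> l [<-|/In_cat [hl|/In_cat [hl|/In_cat [hl|hl]]]].
- rewrite /hlit_sem /= iter_suc; last lia. rewrite shiftdownP; last lia.
  have -> : minn (x + size u) n = x + size u by lia.
  by have -> : maxn (y - size v) 1 = y - size v by lia.
- exact: (@notmax_ok I x y u ltac:(lia) ltac:(lia) l hl).
- exact: (@notmin_ok I x y v ltac:(lia) l hl).
- exact: (@uchars_ok I x y u ltac:(lia) ltac:(lia) hu l hl).
- apply: (@vchars_ok I x y v _ _ _ l hl); [lia|lia|]. by rewrite (_ : y.+1 - size v = (y - size v).+1); [|lia].
Qed.

Lemma dir2_models : w <> [::] -> (horn_models phi2 w <-> ~ gen P S w).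
Proof.
move=> wne.
have n1 : 1 <= n by case: (w) wne.
split.
- move=> [I HI] hg.
  have HLen : forall k x, k <= KK -> 1 <= x -> x + k <= n -> I (LenR k) x (x + k).
    elim=> [|k IH] x hk hx hxn.
    + have := HI _ (or_introl erefl) x x ltac:(lia) ltac:(lia) (leqnn _).
      rewrite addn0 /=; apply => l [<-|[]] //.
    + have hin : List.In (HClause (Some (LenR k.+1)) [:: LLt _ _; LRel _ (LenR k) 1 0]) phi2.
        right; right; apply/In_cat; left; apply/In_map; exists k; split => //; apply/In_iota; lia.
      have := HI _ hin x (x + k.+1) ltac:(lia) ltac:(lia) ltac:(lia); apply.
      move=> l [<-|[<-|[]]]; rewrite /hlit_sem /=; first lia.
      rewrite /suc; have -> : minn x.+1 n = x.+1 by lia.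
      split; last lia. have -> : x + k.+1 = x.+1 + k by lia. apply: IH; lia.
  pose Q := fun A z => forall x y, 1 <= x <= y -> y <= n -> slice w x y = z -> I (inl A) x y.
  have HQ : forall A z, gen P A z -> Q A z.
    apply: gen_ind2 => A c0 cs z hr Ht Hn x y hxy hyn hz.
    have hsz := size_slice (w:=w) (x:=x) (y:=y) (proj1 (andP hxy)) ltac:(lia) hyn.
    suff [body [hbody hok]] : exists body, List.In body (prodb (map alts (c0 :: cs))) /\
        forall l, List.In l body -> hlit_sem w I x y l.
      have hin : List.In (HClause (Some (inl A)) body) phi2.
        right; right; apply/In_cat; right; apply/In_flatten.
        exists [seq HClause (Some (inl A)) b | b <- prodb (map alts (c0 :: cs))]; split.
          by apply/In_map; exists (A, c0, cs).
        by apply/In_map; exists body.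
      exact: (HI _ hin x y ltac:(lia) ltac:(lia) ltac:(lia) hok).
    apply: prodb_complete => a ha.
    move: ha => /In_map [c [hc ->]].
    have hKc := K_bound hr hc.
    case: c hc hKc => [u|u B v] hc hKc /=.
    + have ezu := Ht u hc. rewrite ezu in hz.
      case: u hz hsz hKc ezu hc => [|s0 u] hz hsz hKc ezu hc; first by rewrite hz /= in hsz; lia.
      exists (exact (s0 :: u)); split; first by left.
      apply: (exact_ok HLen hxy hyn hz); rewrite /= in hKc *; lia.
    + have [m [ez [hgm hQm]]] := Hn u B v hc. rewrite ez in hz.
      case: (size m =P 0) => [hm0|hm0].
      * have em : m = [::] by case: (m) hm0.
        subst m. have hB : eps B by apply/Heps.
        exists (exact (u ++ v)); split.
          right; rewrite hB /=. have -> : size (u ++ v) != 0.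
            by apply/eqP; move: hsz; rewrite hz !size_cat /=; lia.
          by left.
        apply: (exact_ok HLen hxy hyn); [by rewrite hz|]; rewrite /= in hKc; rewrite size_cat /=; lia.
      * exists (mid u B v); split; first by left.
        have [ha hb hu hmm hv] := slice3 hxy hyn hz ltac:(lia).
        apply: mid_ok hz _ _ => //; [lia|].
        apply: hQm => //; lia.
  have := HQ _ _ hg 1 n ltac:(lia) (leqnn _) (slice_full w) => hS.
  have := HI _ (or_intror (or_introl erefl)) 1 n ltac:(lia) ltac:(lia) n1; apply.
  move=> l [<-|[<-|[<-|[]]]]; rewrite /hlit_sem /= //; split => //.
- move=> hng; exists Isem => c.
  move=> [<-|[<-|/In_cat [/In_map [k [/In_iota hk ->]]|/In_flatten [s [/In_map [r [hr ->]] /In_map [b [hb ->]]]]]]].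
  + move=> x y hx hy _ hb /=. have := hb _ (or_introl erefl) => /= ->.
    by rewrite inordK // addn0.
  + move=> x y hx hy _ hb /=.
    have := hb _ (or_introl erefl); rewrite /hlit_sem /= => /eqP ex.
    have := hb _ (or_intror (or_introl erefl)); rewrite /hlit_sem /= => /eqP ey.
    have := hb _ (or_intror (or_intror (or_introl erefl))); rewrite /hlit_sem /= => -[hg _].
    by apply: hng; rewrite ex ey slice_full in hg.
  + move=> x y hx hy _ hb /=.
    have := hb _ (or_introl erefl); rewrite /hlit_sem /= => hlt.
    have := hb _ (or_intror (or_introl erefl)); rewrite /hlit_sem /= /suc => -[e _].
    rewrite inordK in e; last lia. rewrite inordK; last lia. lia.
  + case: r hr hb => [[A c0] cs] hr hb /=.
    move=> x y hx hy hxy hok.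
    have H1 := prodb_sound hb hok.
    apply: (gen_rule hr).
    * move=> u hu.
      have [b' [hb' hok']] := H1 _ (proj2 (In_map _ _ _) (ex_intro _ _ (conj hu erefl))).
      have hKc := K_bound hr hu.
      case: u hu hb' hKc => [|a u] hu hb' hKc; first by case: hb'.
      case: hb' => [eb|[]]; subst b'.
      rewrite /= in hKc; apply: exact_sound hok'; rewrite /=; lia.
    * move=> u B v hu.
      have [b' [hb' hok']] := H1 _ (proj2 (In_map _ _ _) (ex_intro _ _ (conj hu erefl))).
      have hKc := K_bound hr hu.
      case: hb' => [eb|]; first by subst b'; apply: mid_sound hok'; lia.
      case hB : (eps B && (size (u ++ v) != 0)) => // -[eb|[]]; subst b'.
      move/andP: hB => [/Heps hB hs0].
      exists [::]; split => //.
      rewrite cat0s. apply: exact_sound hok'; [lia|lia|lia|]; rewrite /= in hKc; rewrite size_cat; lia.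
Qed.
End Dir2.

Section Gen.
Variable Sigma : finType.
Implicit Types (w : seq Sigma) (ch : Z -> option Sigma).

Definition charZ w (i : Z) : option Sigma :=
  if (0 <? i)%Z then onth w (Z.to_nat i).-1 else None.

Definition gsuc ch (i : Z) : Z := if ch (i + 1)%Z is Some _ then (i + 1)%Z else i.
Definition gpred ch (i : Z) : Z := if ch (i - 1)%Z is Some _ then (i - 1)%Z else i.
Definition gshift ch (i : Z) (a : int) : Z :=
  match a with Posz k => iter k (gsuc ch) i | Negz k => iter k.+1 (gpred ch) i end.
Definition gshiftdown ch (i : Z) (b : nat) : Z := iter b (gpred ch) i.

Definition gunary ch (U : unary Sigma) (p : Z) : bool :=
  match U with
  | UQ s => ch p == Some s
  | Umin => ch (p - 1)%Z == None
  | Umax => ch (p + 1)%Z == None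
  end.

Lemma charZ_nat w i : charZ w (Z.of_nat i) = if 0 < i then onth w i.-1 else None.
Proof. rewrite /charZ Nat2Z.id; case: i => [|i] //=. Qed.

Lemma charZ_some w i : (1 <= i <= Z.of_nat (size w))%Z -> exists s, charZ w i = Some s.
Proof.
move=> h; rewrite /charZ; have -> : (0 <? i)%Z = true by lia.
case e: onth => [s|]; first by exists s.
move: (onthNE w (Z.to_nat i).-1); rewrite e /= => /esym; lia.
Qed.

Lemma charZ_none w i : (i < 1 \/ Z.of_nat (size w) < i)%Z -> charZ w i = None.
Proof.
rewrite /charZ; case: ifP => // h1 h2; apply: onth_default; lia.
Qed.

Lemma gsuc_real w (i : nat) : 1 <= i <= size w ->
  gsuc (charZ w) (Z.of_nat i) = Z.of_nat (suc (size w) i).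
Proof.
move=> h; rewrite /gsuc /suc.
case: (ltnP i (size w)) => hi.
- have [s ->] := charZ_some (w:=w) (i := (Z.of_nat i + 1)%Z) ltac:(lia). lia.
- rewrite charZ_none; lia.
Qed.

Lemma gpred_real w (i : nat) : 1 <= i <= size w ->
  gpred (charZ w) (Z.of_nat i) = Z.of_nat (pred_pos i).
Proof.
move=> h; rewrite /gpred /pred_pos.
case: (ltnP 1 i) => hi.
- have [s ->] := charZ_some (w:=w) (i := (Z.of_nat i - 1)%Z) ltac:(lia). lia.
- rewrite charZ_none; lia.
Qed.

Lemma iter_gsuc_real w k (i : nat) : 1 <= i <= size w ->
  iter k (gsuc (charZ w)) (Z.of_nat i) = Z.of_nat (iter k (suc (size w)) i).
Proof.
move=> h; elim: k => [|k IH] //=. rewrite IH gsuc_real //. rewrite iter_suc //; lia.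
Qed.

Lemma iter_gpred_real w k (i : nat) : 1 <= i <= size w ->
  iter k (gpred (charZ w)) (Z.of_nat i) = Z.of_nat (iter k pred_pos i).
Proof.
move=> h; elim: k => [|k IH] //=. rewrite IH gpred_real //. rewrite iter_pred //; lia.
Qed.

Lemma gshift_real w x a : 1 <= x <= size w ->
  gshift (charZ w) (Z.of_nat x) a = Z.of_nat (shift (size w) x a).
Proof. move=> h; case: a => k; [exact: (iter_gsuc_real k h)|exact: (iter_gpred_real k.+1 h)]. Qed.

Lemma gshiftdown_real w y b : 1 <= y <= size w ->
  gshiftdown (charZ w) (Z.of_nat y) b = Z.of_nat (shiftdown y b).
Proof. exact: iter_gpred_real. Qed.

Lemma shift_range n x a : 1 <= x <= n -> 1 <= shift n x a <= n.
Proof.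
case: a => k h.
- have -> : shift n x (Posz k) = iter k (suc n) x by []. rewrite iter_suc //; lia.
- have -> : shift n x (Negz k) = iter k.+1 pred_pos x by []. rewrite iter_pred; lia.
Qed.

Lemma shiftdown_range n y b : 1 <= y <= n -> 1 <= shiftdown y b <= n.
Proof. move=> h; rewrite shiftdownP; lia. Qed.

Lemma gunary_real w U (p : nat) : 1 <= p <= size w ->
  gunary (charZ w) U (Z.of_nat p) = unary_sem w U p.
Proof.
move=> h; case: U => [s||] /=.
- by rewrite charZ_nat; case: p h.
- case: (ltnP 1 p) => hp.
  + have [s ->] := charZ_some (w:=w) (i := (Z.of_nat p - 1)%Z) ltac:(lia). rewrite /=; apply/esym/negbTE; lia.
  + rewrite charZ_none; last lia. rewrite eqxx; apply/esym/eqP; lia.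
- case: (ltnP p (size w)) => hp.
  + have [s ->] := charZ_some (w:=w) (i := (Z.of_nat p + 1)%Z) ltac:(lia). rewrite /=; apply/esym/negbTE; lia.
  + rewrite charZ_none; last lia. rewrite eqxx; apply/esym/eqP; lia.
Qed.

Definition agree ch ch' (x x' lo hi : Z) := forall k, (lo <= k <= hi)%Z -> ch (x + k)%Z = ch' (x' + k)%Z.

Lemma agree_sub ch ch' x x' lo hi lo' hi' : (lo <= lo')%Z -> (hi' <= hi)%Z ->
  agree ch ch' x x' lo hi -> agree ch ch' x x' lo' hi'.
Proof. move=> h1 h2 h k hk; apply: h; lia. Qed.

Lemma iter_gsuc_agree ch ch' x x' m k : agree ch ch' x x' (- m) m -> (Z.of_nat k < m)%Z ->
  (iter k (gsuc ch) x - x = iter k (gsuc ch') x' - x' /\ 0 <= iter k (gsuc ch) x - x <= Z.of_nat k)%Z.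
Proof.
move=> ha; elim: k => [|k IH] hk /=; first lia.
have [e1 e2] := IH ltac:(lia).
set i := iter k (gsuc ch) x in e1 e2 *; set i' := iter k (gsuc ch') x' in e1 e2 *.
rewrite /gsuc.
have -> : (i + 1 = x + (i - x + 1))%Z by lia.
have -> : (i' + 1 = x' + (i - x + 1))%Z by lia.
rewrite (ha (i - x + 1)%Z); last lia.
case: (ch' _); lia.
Qed.

Lemma iter_gpred_agree ch ch' x x' m k : agree ch ch' x x' (- m) m -> (Z.of_nat k < m)%Z ->
  (iter k (gpred ch) x - x = iter k (gpred ch') x' - x' /\ - Z.of_nat k <= iter k (gpred ch) x - x <= 0)%Z.
Proof.
move=> ha; elim: k => [|k IH] hk /=; first lia.
have [e1 e2] := IH ltac:(lia).
set i := iter k (gpred ch) x in e1 e2 *; set i' := iter k (gpred ch') x' in e1 e2 *.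
rewrite /gpred.
have -> : (i - 1 = x + (i - x - 1))%Z by lia.
have -> : (i' - 1 = x' + (i - x - 1))%Z by lia.
rewrite (ha (i - x - 1)%Z); last lia.
case: (ch' _); lia.
Qed.

Definition absZ (a : int) : Z := match a with Posz k => Z.of_nat k | Negz k => Z.of_nat k.+1 end.

Lemma gshift_agree ch ch' x x' m a : agree ch ch' x x' (- m) m -> (absZ a < m)%Z ->
  (gshift ch x a - x = gshift ch' x' a - x' /\ Z.abs (gshift ch x a - x) <= absZ a)%Z.
Proof.
case: a => k ha hk.
- have := iter_gsuc_agree ha hk; rewrite /=; lia.
- have e1 : gshift ch x (Negz k) = iter k.+1 (gpred ch) x by [].
  have e2 : gshift ch' x' (Negz k) = iter k.+1 (gpred ch') x' by [].
  rewrite e1 e2; have := iter_gpred_agree (k := k.+1) ha hk; rewrite /=; lia.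
Qed.

Lemma gshiftdown_agree ch ch' y y' m b : agree ch ch' y y' (- m) m -> (Z.of_nat b < m)%Z ->
  (gshiftdown ch y b - y = gshiftdown ch' y' b - y' /\ - Z.of_nat b <= gshiftdown ch y b - y <= 0)%Z.
Proof. exact: iter_gpred_agree. Qed.

Lemma gunary_agree ch ch' x x' m U d : agree ch ch' x x' (- m) m -> (Z.abs d + 1 <= m)%Z ->
  gunary ch U (x + d) = gunary ch' U (x' + d).
Proof.
move=> ha hd; case: U => [s||] /=.
- by rewrite (ha d) //; lia.
- have -> : (x + d - 1 = x + (d - 1))%Z by lia. have -> : (x' + d - 1 = x' + (d - 1))%Z by lia.
  by rewrite (ha (d - 1)%Z) //; lia.
- have -> : (x + d + 1 = x + (d + 1))%Z by lia. have -> : (x' + d + 1 = x' + (d + 1))%Z by lia.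
  by rewrite (ha (d + 1)%Z) //; lia.
Qed.


Definition glit (T : Type) ch (x y : Z) (l : hlit Sigma T) : bool :=
  match l with
  | LUn pos U v a => let p := gshift ch (if v is VX then x else y) a in
                     if pos then gunary ch U p else ~~ gunary ch U p
  | LEq => (x =? y)%Z
  | LLt => (x <? y)%Z
  | LRel _ a b => (gshift ch x (Posz a) <=? gshiftdown ch y b)%Z
  end.

Definition relOK (T : Type) (I : T -> nat -> nat -> Prop) n x y (l : hlit Sigma T) : Prop :=
  match l with LRel Sr a b => I Sr (shift n x (Posz a)) (shiftdown y b) | _ => True end.

Definition offs (T : Type) (l : hlit Sigma T) : nat :=
  match l with
  | LUn _ _ _ a => match a with Posz k => k | Negz k => k.+1 end
  | LRel _ a b => maxn a b
  | _ => 0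
  end.

Lemma hlit_real (T : Type) w (I : T -> nat -> nat -> Prop) x y l :
  1 <= x <= size w -> 1 <= y <= size w ->
  hlit_sem w I x y l <-> glit (charZ w) (Z.of_nat x) (Z.of_nat y) l /\ relOK I (size w) x y l.
Proof.
move=> hx hy; case: l => [pos U v a| | |Sr a b] /=.
- have hv : 1 <= (if v is VX then x else y) <= size w by case: v.
  have -> : (if v is VX then Z.of_nat x else Z.of_nat y) = Z.of_nat (if v is VX then x else y) by clear hv; case: v.
  rewrite gshift_real // gunary_real; last exact: shift_range.
  by case: pos; split => [h|[]] //.
- split => [->|[/Z.eqb_eq]]; [split => //; apply/Z.eqb_eq|]; lia.
- split => [h|[/Z.ltb_lt]]; [split => //; apply/Z.ltb_lt|]; lia.
- have e1 := gshift_real (Posz a) hx. rewrite /= in e1.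
  have e2 := gshiftdown_real b hy.
  rewrite e1 e2; split => [[h1 h2]|[/Z.leb_le h1 h2]]; [split => //; apply/Z.leb_le|split => //]; lia.
Qed.

Lemma glit_agree (T : Type) ch ch' x y x' y' (m : Z) (l : hlit Sigma T) :
  agree ch ch' x x' (- m) m -> agree ch ch' y y' (- m) m -> (x <= y)%Z -> (x' <= y')%Z ->
  (y - x = y' - x' \/ (2 * m - 4 < y - x /\ 2 * m - 4 < y' - x'))%Z ->
  (Z.of_nat (offs l) + 2 <= m)%Z -> glit ch x y l = glit ch' x' y' l.
Proof.
move=> hax hay hxy hxy' hlen; case: l => [pos U v a| | |Sr a b] /= ho.
- have hv : agree ch ch' (if v is VX then x else y) (if v is VX then x' else y') (- m) m by case: v.
  have [e1 e2] := gshift_agree hv (a := a) ltac:(case: a ho => k /=; lia).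
  have -> : gshift ch (if v is VX then x else y) a =
    ((if v is VX then x else y) + (gshift ch (if v is VX then x else y) a - (if v is VX then x else y)))%Z by lia.
  have -> : gshift ch' (if v is VX then x' else y') a =
    ((if v is VX then x' else y') + (gshift ch (if v is VX then x else y) a - (if v is VX then x else y)))%Z by lia.
  rewrite (gunary_agree U hv); last by move: e2 ho; case: (a) => k /=; lia.
  by [].
- case: hlen => h.
  + apply/idP/idP => /Z.eqb_eq h'; apply/Z.eqb_eq; lia.
  + have -> : (x =? y)%Z = false by apply/Z.eqb_neq; lia.
    by apply/esym/Z.eqb_neq; lia.
- case: hlen => h.
  + apply/idP/idP => /Z.ltb_lt h'; apply/Z.ltb_lt; lia.
  + have -> : (x <? y)%Z = true by apply/Z.ltb_lt; lia.
    by apply/esym/Z.ltb_lt; lia.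
- have [e1 e2] := gshift_agree hax (a := Posz a) ltac:(rewrite /=; lia).
  have [e3 e4] := gshiftdown_agree (b := b) hay ltac:(lia).
  rewrite /= in e1 e2.
  case: hlen => h.
  + apply/idP/idP => /Z.leb_le h'; apply/Z.leb_le; lia.
  + have -> : (iter a (gsuc ch) x <=? gshiftdown ch y b)%Z = true by apply/Z.leb_le; lia.
    by apply/esym/Z.leb_le; lia.
Qed.

Section Ctx.
Variable c : nat.
Definition ctxL ch (i : Z) := [seq ch (i - Z.of_nat c + Z.of_nat k)%Z | k <- iota 0 c].
Definition ctxR ch (i : Z) := [seq ch (i + 1 + Z.of_nat k)%Z | k <- iota 0 c].
Lemma size_ctxL ch i : size (ctxL ch i) == c. Proof. by rewrite size_map size_iota. Qed.
Lemma size_ctxR ch i : size (ctxR ch i) == c. Proof. by rewrite size_map size_iota. Qed.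
Definition ctxLt ch i : c.-tuple (option Sigma) := Tuple (size_ctxL ch i).
Definition ctxRt ch i : c.-tuple (option Sigma) := Tuple (size_ctxR ch i).

Lemma nth_ctxL ch i j : j < c -> nth None (ctxL ch i) j = ch (i - Z.of_nat c + Z.of_nat j)%Z.
Proof. by move=> hj; rewrite (nth_map 0) ?size_iota // nth_iota. Qed.
Lemma nth_ctxR ch i j : j < c -> nth None (ctxR ch i) j = ch (i + 1 + Z.of_nat j)%Z.
Proof. by move=> hj; rewrite (nth_map 0) ?size_iota // nth_iota. Qed.

Lemma ctxL_agree ch ch' x x' d : agree ch ch' x x' (- Z.of_nat c) (Z.of_nat c - 1) ->
  (0 <= d <= Z.of_nat c)%Z -> ctxLt ch (x + d) = ctxLt ch' (x' + d).
Proof.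
move=> ha hd; apply: val_inj => /=; apply/eq_in_map => k; rewrite mem_iota => hk.
have -> : (x + d - Z.of_nat c + Z.of_nat k = x + (d - Z.of_nat c + Z.of_nat k))%Z by lia.
have -> : (x' + d - Z.of_nat c + Z.of_nat k = x' + (d - Z.of_nat c + Z.of_nat k))%Z by lia.
apply: ha; lia.
Qed.

Lemma ctxR_agree ch ch' y y' e : agree ch ch' y y' (- (Z.of_nat c - 1)) (Z.of_nat c) ->
  (0 <= e <= Z.of_nat c)%Z -> ctxRt ch (y - e) = ctxRt ch' (y' - e).
Proof.
move=> ha hd; apply: val_inj => /=; apply/eq_in_map => k; rewrite mem_iota => hk.
have -> : (y - e + 1 + Z.of_nat k = y + (1 - e + Z.of_nat k))%Z by lia.
have -> : (y' - e + 1 + Z.of_nat k = y' + (1 - e + Z.of_nat k))%Z by lia.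
apply: ha; lia.
Qed.
End Ctx.

Inductive key := KShort of seq Sigma | KLong of seq Sigma & seq Sigma.

Definition kfull (lc rc : seq (option Sigma)) (k : key) : seq (option Sigma) :=
  match k with
  | KShort z => lc ++ map Some z ++ rc
  | KLong p q => lc ++ map Some p ++ map Some q ++ rc
  end.
Definition chof (s : seq (option Sigma)) (i : Z) : option Sigma :=
  if (i <? 0)%Z then None else nth None s (Z.to_nat i).
Definition kiy (c : nat) (k : key) : Z :=
  match k with KShort z => (Z.of_nat (c + size z) - 1)%Z | KLong _ _ => (Z.of_nat (3 * c) - 1)%Z end.

Lemma charZ_pos w i : (0 < i)%Z -> charZ w i = onth w (Z.to_nat i).-1.
Proof. by move=> h; rewrite /charZ; have -> : (0 <? i)%Z = true by lia. Qed.

Lemma size_ctxL' c ch i : size (ctxL c ch i) = c. Proof. by rewrite size_map size_iota. Qed.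
Lemma size_ctxR' c ch i : size (ctxR c ch i) = c. Proof. by rewrite size_map size_iota. Qed.

Section Pseudo.
Variables (c : nat) (w : seq Sigma) (x y : nat).
Hypothesis (hx : 1 <= x) (hxy : x <= y) (hyn : y <= size w).
Notation z := (slice w x y).
Notation lc := (ctxL c (charZ w) (Z.of_nat x)).
Notation rc := (ctxR c (charZ w) (Z.of_nat y)).

Lemma size_z : size z = y.+1 - x.
Proof. by rewrite size_slice //; lia. Qed.

Lemma full_short j : j < 2 * c + size z ->
  nth None (kfull lc rc (KShort z)) j = charZ w (Z.of_nat x - Z.of_nat c + Z.of_nat j)%Z.
Proof.
move=> hj; have hz := size_z.
rewrite /kfull nth_cat size_ctxL'; case: ifP => h1; first by rewrite nth_ctxL.
rewrite nth_cat size_map; case: ifP => h2.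
- rewrite -onthE slice_onth //; last lia. rewrite charZ_pos; last lia. congr onth; lia.
- rewrite nth_ctxR; last lia. congr charZ; lia.
Qed.

Lemma full_long j : 2 * c <= size z -> j < 4 * c ->
  nth None (kfull lc rc (KLong (take c z) (drop (size z - c) z))) j =
  if j < 2 * c then charZ w (Z.of_nat x - Z.of_nat c + Z.of_nat j)%Z
  else charZ w (Z.of_nat y - Z.of_nat (3 * c) + 1 + Z.of_nat j)%Z.
Proof.
move=> hzc hj; have hz := size_z.
have hp : size (take c z) = c by rewrite size_takel //; lia.
have hq : size (drop (size z - c) z) = c by rewrite size_drop; lia.
rewrite /kfull nth_cat size_ctxL'; case: ifP => h1.
  by rewrite nth_ctxL // ifT //; lia.
rewrite nth_cat size_map hp; case: ifP => h2.
  rewrite -onthE onth_take ifT; last lia.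
  rewrite slice_onth //; last lia. rewrite ifT; last lia. rewrite charZ_pos; last lia. congr onth; lia.
rewrite nth_cat size_map hq; case: ifP => h3.
  rewrite -onthE onth_drop slice_onth //; last lia. rewrite ifF; last lia.
  rewrite charZ_pos; last lia. congr onth; lia.
rewrite nth_ctxR; last lia. rewrite ifF; last lia. congr charZ; lia.
Qed.

Lemma agree_short_x : agree (charZ w) (chof (kfull lc rc (KShort z))) (Z.of_nat x) (Z.of_nat c)
  (- Z.of_nat c) (Z.of_nat c - 1).
Proof.
move=> k hk; have hz := size_z; rewrite /chof ifF; last lia.
rewrite full_short; last lia. congr charZ; lia.
Qed.

Lemma agree_short_y : agree (charZ w) (chof (kfull lc rc (KShort z))) (Z.of_nat y) (kiy c (KShort z))
  (- (Z.of_nat c - 1)) (Z.of_nat c).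
Proof.
move=> k hk; have hz := size_z; rewrite /kiy /chof ifF; last lia.
rewrite full_short; last lia. congr charZ; lia.
Qed.

Lemma agree_long_x : 2 * c <= size z ->
  agree (charZ w) (chof (kfull lc rc (KLong (take c z) (drop (size z - c) z)))) (Z.of_nat x) (Z.of_nat c)
  (- Z.of_nat c) (Z.of_nat c - 1).
Proof.
move=> hzc k hk; have hz := size_z; rewrite /chof ifF; last lia.
rewrite full_long //; last lia. rewrite ifT; last lia. congr charZ; lia.
Qed.

Lemma agree_long_y : 2 * c <= size z ->
  agree (charZ w) (chof (kfull lc rc (KLong (take c z) (drop (size z - c) z)))) (Z.of_nat y)
  (kiy c (KLong (take c z) (drop (size z - c) z))) (- (Z.of_nat c - 1)) (Z.of_nat c).
Proof.
move=> hzc k hk; have hz := size_z; rewrite /kiy /chof ifF; last lia.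
rewrite full_long //; last lia. rewrite ifF; last lia. congr charZ; lia.
Qed.
End Pseudo.

Definition kmatch (c : nat) (k : key) (z : seq Sigma) : Prop :=
  match k with
  | KShort z' => z' = z
  | KLong p q => [/\ p = take c z, q = drop (size z - c) z & 2 * c <= size z]
  end.
Definition kpre (k : key) (d : nat) : seq Sigma :=
  match k with KShort z => take d z | KLong p _ => take d p end.
Definition ksuf (k : key) (e : nat) : seq Sigma :=
  match k with KShort z => drop (size z - e) z | KLong _ q => drop (size q - e) q end.

Lemma kpre_match c k z d : kmatch c k z -> d <= c -> kpre k d = take d z.
Proof. case: k => [z'|p q] /=; first by move=> ->. by case=> -> _ _ hd; rewrite take_takel. Qed.

Lemma ksuf_match c k z e : kmatch c k z -> e <= c -> ksuf k e = drop (size z - e) z.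
Proof.
case: k => [z'|p q] /=; first by move=> ->.
case=> _ -> hz he; rewrite drop_drop size_drop; congr drop; lia.
Qed.

Section Key.
Variables (c : nat) (w : seq Sigma) (x y : nat).
Hypothesis (hc : 3 <= c) (hx : 1 <= x) (hxy : x <= y) (hyn : y <= size w).
Notation z := (slice w x y).
Notation lc := (ctxL c (charZ w) (Z.of_nat x)).
Notation rc := (ctxR c (charZ w) (Z.of_nat y)).
Variable k : key.
Hypothesis hk : kmatch c k z.
Notation ch0 := (chof (kfull lc rc k)).
Notation iy := (kiy c k).

Lemma agree_key : [/\ agree (charZ w) ch0 (Z.of_nat x) (Z.of_nat c) (- Z.of_nat c) (Z.of_nat c - 1),
  agree (charZ w) ch0 (Z.of_nat y) iy (- (Z.of_nat c - 1)) (Z.of_nat c) &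
  (Z.of_nat y - Z.of_nat x = iy - Z.of_nat c \/
   (2 * (Z.of_nat c - 1) - 4 < Z.of_nat y - Z.of_nat x /\ 2 * (Z.of_nat c - 1) - 4 < iy - Z.of_nat c))%Z].
Proof.
have hz := size_z hx hxy hyn.
case: k hk => [z'|p q] hk'; rewrite /kmatch in hk'.
- rewrite hk'; split; [exact: agree_short_x|exact: agree_short_y|left; rewrite /kiy; lia].
- case: hk' => -> -> hzc; split; [exact: agree_long_x|exact: agree_long_y|right; rewrite /kiy; lia].
Qed.

Lemma glit_key (T : Type) (l : hlit Sigma T) : offs l + 3 <= c ->
  glit (charZ w) (Z.of_nat x) (Z.of_nat y) l = glit ch0 (Z.of_nat c) iy l.
Proof.
move=> ho; have [h1 h2 h3] := agree_key.
apply: (glit_agree (m := (Z.of_nat c - 1)%Z)).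
- by apply: agree_sub h1; lia.
- by apply: agree_sub h2; lia.
- lia.
- case: h3; lia.
- exact: h3.
- lia.
Qed.

Lemma rel_facts a b : a + 3 <= c -> b + 3 <= c ->
  let x'0 := gshift ch0 (Z.of_nat c) (Posz a) in
  let y'0 := gshiftdown ch0 iy b in
  let x' := shift (size w) x (Posz a) in
  let y' := shiftdown y b in
  [/\ (Z.of_nat x' - Z.of_nat x = x'0 - Z.of_nat c)%Z,
      (Z.of_nat y - Z.of_nat y' = iy - y'0)%Z,
      ctxLt c ch0 x'0 = ctxLt c (charZ w) (Z.of_nat x'),
      ctxRt c ch0 y'0 = ctxRt c (charZ w) (Z.of_nat y') &
      kpre k (Z.to_nat (x'0 - Z.of_nat c)) = take (x' - x) z /\
      ksuf k (Z.to_nat (iy - y'0)) = drop (size z - (y - y')) z].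
Proof.
move=> ha hb /=.
have [h1 h2 h3] := agree_key.
have h1' : agree (charZ w) ch0 (Z.of_nat x) (Z.of_nat c) (- (Z.of_nat c - 1)) (Z.of_nat c - 1).
  by apply: agree_sub h1; lia.
have h2' : agree (charZ w) ch0 (Z.of_nat y) iy (- (Z.of_nat c - 1)) (Z.of_nat c - 1).
  by apply: agree_sub h2; lia.
have [e1 e2] := iter_gsuc_agree (k := a) h1' ltac:(lia).
have [e3 e4] := gshiftdown_agree (b := b) h2' ltac:(lia).
rewrite /= in e1 e2.
have rx := gshift_real (Posz a) (w := w) (x := x) ltac:(lia). rewrite /= in rx.
have ry := gshiftdown_real b (w := w) (y := y) ltac:(lia). rewrite /gshiftdown in ry e3 e4.
have hx1 : 1 <= shift (size w) x (Posz a) <= size w by apply: shift_range; lia.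
have hy1 : 1 <= shiftdown y b <= size w by apply: shiftdown_range; lia.
rewrite /= in hx1.
split.
- rewrite -rx; lia.
- rewrite /gshiftdown -ry; lia.
- have -> : iter a (gsuc ch0) (Z.of_nat c) = (Z.of_nat c + (iter a (gsuc (charZ w)) (Z.of_nat x) - Z.of_nat x))%Z by lia.
  rewrite -(ctxL_agree h1); last lia. congr ctxLt; lia.
- rewrite /gshiftdown.
  have -> : iter b (gpred ch0) iy = (iy - (Z.of_nat y - iter b (gpred (charZ w)) (Z.of_nat y)))%Z by lia.
  rewrite -(ctxR_agree h2); last lia. congr ctxRt; lia.
split.
- rewrite (kpre_match hk); last lia. congr take; lia.
- rewrite /gshiftdown (ksuf_match hk); last lia. congr drop; lia.
Qed.
End Key.
End Gen.

Lemma slice_decomp (Sigma : Type) (w : seq Sigma) x y x' y' : 1 <= x <= x' -> x' <= y' -> y' <= y ->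
  y <= size w ->
  slice w x y = take (x' - x) (slice w x y) ++ slice w x' y' ++ drop (size (slice w x y) - (y - y')) (slice w x y).
Proof.
move=> h1 h2 h3 h4.
have e1 := @slice_cat _ w x x'.-1 y ltac:(lia) ltac:(lia) ltac:(lia).
have e2 := @slice_cat _ w x' y' y ltac:(lia) ltac:(lia) ltac:(lia).
rewrite (_ : x'.-1.+1 = x') in e1; last lia.
rewrite e2 in e1.
have sA : size (slice w x x'.-1) = x' - x by rewrite size_slice; lia.
have sB : size (slice w x' y') = y'.+1 - x' by rewrite size_slice; lia.
have sC : size (slice w y'.+1 y) = y - y' by rewrite size_slice; lia.
rewrite e1 take_size_cat //.
have -> : size (slice w x x'.-1 ++ slice w x' y' ++ slice w y'.+1 y) - (y - y') =
  size (slice w x x'.-1 ++ slice w x' y') by rewrite !size_cat; lia.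
by rewrite (catA _ _ (slice w y'.+1 y)) drop_size_cat // -catA.
Qed.

Section Grammar1.
Variables (Sigma T : finType) (psi : seq (hclause Sigma T)) (c : nat).
Hypothesis hc : 3 <= c.
Hypothesis Hoffs : forall cl l, List.In cl psi -> List.In l (hc_body cl) -> offs l + 3 <= c.

Notation ctx := (c.-tuple (option Sigma)).
Definition NT := option (T * ctx * ctx).

Definition ch0 (lc rc : ctx) (k : key Sigma) := chof (kfull lc rc k).

Definition relconj (lc rc : ctx) (k : key Sigma) (l : hlit Sigma T) : option (lconj Sigma NT) :=
  match l with
  | LRel Sr a b =>
    let x'0 := gshift (ch0 lc rc k) (Z.of_nat c) (Posz a) in
    let y'0 := gshiftdown (ch0 lc rc k) (kiy c k) b in
    Some (CNT (kpre k (Z.to_nat (x'0 - Z.of_nat c)))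
              (Some (Sr, ctxLt c (ch0 lc rc k) x'0, ctxRt c (ch0 lc rc k) y'0))
              (ksuf k (Z.to_nat (kiy c k - y'0))))
  | _ => None
  end.

Definition kconj (k : key Sigma) : lconj Sigma NT :=
  match k with KShort z => CTerm _ z | KLong p q => CNT p None q end.

Definition mkrules (cl : hclause Sigma T) (lc rc : ctx) (k : key Sigma) : seq (lrule Sigma NT) :=
  if hc_head cl is Some r then
    if all (glit (ch0 lc rc k) (Z.of_nat c) (kiy c k)) (hc_body cl)
    then [:: (Some (r, lc, rc), kconj k, pmap (relconj lc rc k) (hc_body cl))] else [::]
  else [::].

Definition keys : seq (key Sigma) :=
  [seq KShort (tval t) | m <- iota 1 (2 * c).-1, t <- enum {: m.-tuple Sigma}] ++
  [seq KLong (tval p) (tval q) | p <- enum {: c.-tuple Sigma}, q <- enum {: c.-tuple Sigma}].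

Definition allrules : seq (lrule Sigma NT) :=
  (None, CTerm _ [::], [::]) :: [seq (None, CNT [:: s] None [::], [::]) | s <- enum Sigma].

Definition P1 : seq (lrule Sigma NT) :=
  allrules ++ flatten [seq flatten [seq flatten [seq flatten [seq mkrules cl lc rc k | k <- keys]
     | rc <- enum {: ctx}] | lc <- enum {: ctx}] | cl <- psi].

Lemma In_enum (U : finType) (u : U) : List.In u (enum U).
Proof. by apply: In_mem; rewrite mem_enum. Qed.

Lemma In_P1 r lc rc c0 cs : List.In (Some (r, lc, rc), c0, cs) P1 ->
  exists cl k, [/\ List.In cl psi, List.In k keys, hc_head cl = Some r,
     all (glit (ch0 lc rc k) (Z.of_nat c) (kiy c k)) (hc_body cl) &
     c0 = kconj k /\ cs = pmap (relconj lc rc k) (hc_body cl)].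
Proof.
move=> /In_cat [/= [|/In_map [s [_ ]]]|] //.
move=> /In_flatten [s1 [/In_map [cl [hcl ->]] /In_flatten [s2 [/In_map [lc' [_ ->]]
  /In_flatten [s3 [/In_map [rc' [_ ->]] /In_flatten [s4 [/In_map [k [hk ->]] hin]]]]]]]].
exists cl, k; move: hin; rewrite /mkrules.
case: (hc_head cl) => [r'|] //; case: ifP => // hall [[<- <- <- <- <-]|[]] //.
Qed.

Lemma In_P1_mk cl k lc rc r : List.In cl psi -> List.In k keys -> hc_head cl = Some r ->
  all (glit (ch0 lc rc k) (Z.of_nat c) (kiy c k)) (hc_body cl) ->
  List.In (Some (r, lc, rc), kconj k, pmap (relconj lc rc k) (hc_body cl)) P1.
Proof.
move=> hcl hk hr hall; apply/In_cat; right.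
apply/In_flatten; eexists; split; first by apply/In_map; exists cl; split; [exact: hcl|reflexivity].
apply/In_flatten; eexists; split; first by apply/In_map; exists lc; split; [exact: In_enum|reflexivity].
apply/In_flatten; eexists; split; first by apply/In_map; exists rc; split; [exact: In_enum|reflexivity].
apply/In_flatten; eexists; split; first by apply/In_map; exists k; split; [exact: hk|reflexivity].
by rewrite /mkrules hr hall; left.
Qed.

Lemma keys_short z : List.In (KShort z) keys -> 0 < size z.
Proof.
move=> /In_cat [/In_flatten [s [/In_map [m [/In_iota hm ->]] /In_map [t [_ [->]]]]]|/In_flatten [s [/In_map [p [_ ->]] /In_map [q [_ //]]]]].
by rewrite size_tuple; lia.
Qed.

Lemma keys_long p q : List.In (KLong p q) keys -> size p = c /\ size q = c.
Proof.
move=> /In_cat [/In_flatten [s [/In_map [m [/In_iota hm ->]] /In_map [t [_ //]]]]|/In_flatten [s [/In_map [p' [_ ->]] /In_map [q' [_ [-> ->]]]]]].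
by rewrite !size_tuple.
Qed.

Definition kkey (z : seq Sigma) : key Sigma :=
  if size z < 2 * c then KShort z else KLong (take c z) (drop (size z - c) z).

Lemma kkey_in z : 0 < size z -> List.In (kkey z) keys.
Proof.
move=> hz; rewrite /kkey; case: ifP => h; apply/In_cat; [left|right]; apply/In_flatten.
- exists [seq KShort (tval t) | t <- enum {: (size z).-tuple Sigma}]; split.
    apply/In_map; exists (size z); split => //; apply/In_iota; lia.
  apply/In_map; exists (in_tuple z); split => //; exact: In_enum.
- have hp : size (take c z) == c by rewrite size_takel //; lia.
  have hq : size (drop (size z - c) z) == c by rewrite size_drop; apply/eqP; lia.
  exists [seq KLong (tval (Tuple hp)) (tval q) | q <- enum {: c.-tuple Sigma}]; split.
    by apply/In_map; exists (Tuple hp); split => //; exact: In_enum.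
  apply/In_map; exists (Tuple hq); split => //; exact: In_enum.
Qed.

Lemma kkey_match z : kmatch c (kkey z) z.
Proof. rewrite /kkey; case: ifP => h //=; split => //; lia. Qed.

Lemma gen_all m : gen P1 None m.
Proof.
elim: m => [|s m IH].
- apply: (gen_rule (c0 := CTerm _ [::]) (cs := [::])); first by left.
  + by move=> u [[<-]|[]].
  + by move=> u B v [|[]].
- apply: (gen_rule (c0 := CNT [:: s] None [::]) (cs := [::])).
  + by right; apply/In_cat; left; apply/In_map; exists s; split => //; exact: In_enum.
  + by move=> u [|[]].
  + move=> u B v [[<- <- <-]|[]]; exists m; split => //; by rewrite cats0.
Qed.


Lemma gen_nonempty X z : gen P1 (Some X) z -> 0 < size z.
Proof.
move=> g.
have := (@gen_ind2 _ _ P1 (fun A z => A <> None -> 0 < size z)) _ _ _ g; apply => //.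
move=> [[[r lc] rc]|] c0 cs z' hr Ht Hn _ //.
have [cl [k [hcl hk hhead hall [ec0 ecs]]]] := In_P1 hr.
subst c0; case: k hk Ht Hn {hall ecs hr} => [zk|p q] hk Ht Hn.
- by rewrite (Ht zk (or_introl erefl)); apply: keys_short.
- have [hp hq] := keys_long hk.
  have [m [e _]] := Hn p None q (or_introl erefl).
  by rewrite e !size_cat hp; lia.
Qed.

Lemma sound1 w (I : T -> nat -> nat -> Prop) : (forall cl, List.In cl psi -> hclause_sem w I cl) ->
  forall A z, gen P1 A z -> forall r lc rc, A = Some (r, lc, rc) -> forall x y, 1 <= x <= y -> y <= size w ->
  lc = ctxLt c (charZ w) (Z.of_nat x) -> rc = ctxRt c (charZ w) (Z.of_nat y) -> slice w x y = z -> I r x y.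
Proof.
move=> HI A z g.
apply: (@gen_ind2 _ _ P1 (fun A z => forall r lc rc, A = Some (r, lc, rc) -> forall x y, 1 <= x <= y -> y <= size w ->
  lc = ctxLt c (charZ w) (Z.of_nat x) -> rc = ctxRt c (charZ w) (Z.of_nat y) -> slice w x y = z -> I r x y)) g.
clear A z; move=> A c0 cs z hr Ht Hn r lc rc eA x y hxy hyn elc erc ez.
subst A.
have [cl [k [hcl hk hhead hall [ec0 ecs]]]] := In_P1 hr.
subst c0 cs lc rc.
have hkm : kmatch c k (slice w x y).
  case: k hk Ht Hn hall {hr} => [z'|p q] hk Ht Hn hall /=.
  - by rewrite ez; apply/esym/Ht; left.
  - have [hp hq] := keys_long hk.
    have [m [e _]] := Hn p None q (or_introl erefl).
    rewrite ez e; split.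
    + by rewrite take_size_cat.
    + rewrite catA drop_size_cat // !size_cat; lia.
    + rewrite !size_cat; lia.
have hx1 : 1 <= x by case/andP: hxy.
have hxy1 : x <= y by case/andP: hxy.
have HB := HI cl hcl x y ltac:(lia) ltac:(lia) hxy1.
rewrite hhead in HB; apply: HB => l hl.
have hol := Hoffs hcl hl.
apply/(hlit_real I l (w := w) (x := x) (y := y) ltac:(lia) ltac:(lia)).
have hgl : glit (charZ w) (Z.of_nat x) (Z.of_nat y) l.
  rewrite (glit_key hc hx1 hxy1 hyn hkm hol). exact: (proj1 (all_In _ _) hall l hl).
split => //.
case: l hl hol hgl => // Sr a b hl hol hgl.
rewrite /offs in hol.
have := Hn _ _ _ (or_intror (proj2 (In_pmap _ _ _) (ex_intro _ (LRel _ Sr a b) (conj hl erefl)))).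
move=> [m' [e [_ hQ]]].
have [f1 f2 f3 f4 [f5 f6]] := rel_facts hc hx1 hxy1 hyn hkm (a := a) (b := b) ltac:(lia) ltac:(lia).
rewrite /ch0 /= in e hQ.
rewrite /= in f1 f3 f5 hgl.
rewrite f5 f6 in e.
rewrite iter_gsuc_real in hgl; last lia.
rewrite gshiftdown_real in hgl; last lia.
move/Z.leb_le in hgl.
have hr1 : 1 <= iter a (suc (size w)) x <= size w.
  by have := @shift_range (size w) x (Posz a) ltac:(lia).
have hr2 : 1 <= shiftdown y b <= size w by apply: shiftdown_range; lia.
have ed := @slice_decomp _ w x y (iter a (suc (size w)) x) (shiftdown y b)
  ltac:(rewrite iter_suc; lia) ltac:(lia) ltac:(rewrite shiftdownP; lia) hyn.
rewrite -ez {1}ed in e.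
have [_ e'] := cat_eq_l erefl e.
have em := cat_eq_r e'.
rewrite /relOK /=.
apply: (hQ Sr _ _ erefl (iter a (suc (size w)) x) (shiftdown y b)) => //; first lia.
by rewrite shiftdownP; lia.
Qed.

Definition Icomp w : T -> nat -> nat -> Prop := fun r x y =>
  gen P1 (Some (r, ctxLt c (charZ w) (Z.of_nat x), ctxRt c (charZ w) (Z.of_nat y))) (slice w x y).

Lemma complete1 w cl r : List.In cl psi -> hc_head cl = Some r -> hclause_sem w (Icomp w) cl.
Proof.
move=> hcl hhead x y hx hy hxy hb; rewrite hhead.
have hx1 : 1 <= x by case/andP: hx.
have hyn : y <= size w by case/andP: hy.
have hz : size (slice w x y) = y.+1 - x by rewrite size_slice; lia.
have [k [hkin hkm]] : exists k, List.In k keys /\ kmatch c k (slice w x y).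
  exists (kkey (slice w x y)); split; [apply: kkey_in; lia|exact: kkey_match].
have hreal : forall l, List.In l (hc_body cl) ->
    glit (charZ w) (Z.of_nat x) (Z.of_nat y) l /\ relOK (Icomp w) (size w) x y l.
  by move=> l hl; apply/(hlit_real (Icomp w) l hx hy); apply: hb.
have hall : all (glit (ch0 (ctxLt c (charZ w) (Z.of_nat x)) (ctxRt c (charZ w) (Z.of_nat y)) k)
                     (Z.of_nat c) (kiy c k)) (hc_body cl).
  apply/all_In => l hl; rewrite /ch0 /=.
  rewrite -(glit_key hc hx1 hxy hyn hkm (Hoffs hcl hl)).
  exact: (proj1 (hreal l hl)).
apply: (gen_rule (In_P1_mk hcl hkin hhead hall)).
- move=> u [hu|/In_pmap [l [hl hrel]]].
  + case: k hkin hkm hall hu => [zk|p q] //= _ hkm _ [<-]. by [].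
  + by case: l hl hrel.
- move=> u B v [hu|/In_pmap [l [hl hrel]]].
  + case: k hkin hkm hall hu => [zk|p q] //= _ [hp hq hzc] _ [<- <- <-].
    exists (drop c (take (size (slice w x y) - c) (slice w x y))); split; last exact: gen_all.
    have e : take c (slice w x y) = take c (take (size (slice w x y) - c) (slice w x y)).
      by rewrite take_takel //; lia.
    by rewrite hp hq e catA !cat_take_drop.
  + case: l hl hrel => // Sr a b hl.
    rewrite /relconj /ch0 /= => -[<- <- <-].
    have hol := Hoffs hcl hl. rewrite /offs in hol.
    have [hgl hrl] := hreal _ hl.
    have [f1 f2 f3 f4 [f5 f6]] := rel_facts hc hx1 hxy hyn hkm (a := a) (b := b) ltac:(lia) ltac:(lia).
    rewrite /= in f1 f3 f5 hgl hrl.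
    rewrite iter_gsuc_real in hgl; last lia.
    rewrite gshiftdown_real in hgl; last lia.
    move/Z.leb_le in hgl.
    have hr1 : 1 <= iter a (suc (size w)) x <= size w.
      by have := @shift_range (size w) x (Posz a) ltac:(lia).
    have hr2 : 1 <= shiftdown y b <= size w by apply: shiftdown_range; lia.
    exists (slice w (iter a (suc (size w)) x) (shiftdown y b)); split.
    * rewrite f5 f6; apply: slice_decomp => //; [rewrite iter_suc; lia|lia|rewrite shiftdownP; lia].
    * by rewrite f3 f4.
Qed.
End Grammar1.

Section Dir1.
Variables (Sigma R : finType) (phi : seq (hclause Sigma R)).
Definition T1 := option (option R).
Definition trl (l : hlit Sigma R) : hlit Sigma T1 :=
  match l with
  | LUn pos U v a => LUn _ pos U v a
  | LEq => LEq _ _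
  | LLt => LLt _ _
  | LRel Sr a b => LRel _ (Some (Some Sr) : T1) a b
  end.
Definition trc (cl : hclause Sigma R) : hclause Sigma T1 :=
  HClause (Some (Some (hc_head cl) : T1)) (map trl (hc_body cl)).
Definition topcl : seq (hclause Sigma T1) :=
  [:: HClause (Some (None : T1)) [:: LRel _ (Some None : T1) 0 0];
      HClause (Some (None : T1)) [:: LLt _ _; LRel _ (None : T1) 1 0];
      HClause (Some (None : T1)) [:: LLt _ _; LRel _ (None : T1) 0 1]].
Definition psi1 := map trc phi ++ topcl.
Definition c1 := foldr maxn 0 (map (fun cl => foldr maxn 0 (map (@offs _ _) (hc_body cl))) psi1) + 3.

Lemma hc1 : 3 <= c1. Proof. rewrite /c1; lia. Qed.
Lemma Hoffs1 cl l : List.In cl psi1 -> List.In l (hc_body cl) -> offs l + 3 <= c1.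
Proof.
move=> h1 h2; rewrite /c1 leq_add2r.
apply: leq_trans (le_foldr_max (fun cl => foldr maxn 0 (map (@offs _ _) (hc_body cl))) h1).
exact: (le_foldr_max (@offs _ _) h2).
Qed.

Definition nonectx : c1.-tuple (option Sigma) := ctxLt c1 (fun _ => None) 0%Z.
Definition S1 : NT Sigma T1 c1 := Some (None, nonectx, nonectx).

Lemma ctx_start w : 0 < size w ->
  ctxLt c1 (charZ w) (Z.of_nat 1) = nonectx /\ ctxRt c1 (charZ w) (Z.of_nat (size w)) = nonectx.
Proof.
move=> hw; split; apply: val_inj => /=; rewrite /ctxL /ctxR; apply/eq_in_map => k; rewrite mem_iota => hk;
  rewrite charZ_none //; lia.
Qed.

Definition liftI (I : R -> nat -> nat -> Prop) : T1 -> nat -> nat -> Prop :=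
  fun t => match t with Some (Some r) => I r | _ => fun _ _ => False end.

Lemma trl_sem w I x y l : hlit_sem w (liftI I) x y (trl l) <-> hlit_sem w I x y l.
Proof. by case: l. Qed.

Lemma dir1 w : (w <> [::] /\ ~ horn_models phi w) <-> gen (P1 psi1 c1) S1 w.
Proof.
split.
- move=> [wne hn]; apply: NNPP => hng; apply: hn.
  have n1 : 0 < size w by case: (w) wne.
  have [e1 e2] := ctx_start n1.
  pose Ic := Icomp psi1 c1 w.
  have HC : forall cl r, List.In cl psi1 -> hc_head cl = Some r -> hclause_sem w Ic cl.
    move=> cl r; exact: (complete1 hc1 Hoffs1).
  have Hin_top : forall cl, List.In cl topcl -> List.In cl psi1.
    by move=> cl h; apply/In_cat; right.
  have ext : forall d x y, (x - 1) + (size w - y) = d -> 1 <= x <= y -> y <= size w -> Ic None x y -> Ic None 1 (size w).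
    elim=> [|d IH] x y hd hxy hyn hI.
    + have ex : x = 1 by lia. have ey : y = size w by lia. by rewrite ex ey in hI.
    + case: (ltnP 1 x) => hx.
      * apply: (IH x.-1 y) => //; [lia|lia|].
        have := HC _ (None) (Hin_top _ (or_intror (or_introl erefl))) erefl x.-1 y ltac:(lia) ltac:(lia) ltac:(lia).
        apply => l [<-|[<-|[]]] /=; first lia.
        rewrite /suc; have -> : minn x.-1.+1 (size w) = x by lia. split => //; lia.
      * apply: (IH x y.+1) => //; [lia|lia|lia|].
        have := HC _ (None) (Hin_top _ (or_intror (or_intror (or_introl erefl)))) erefl x y.+1 ltac:(lia) ltac:(lia) ltac:(lia).
        apply => l [<-|[<-|[]]] /=; first lia.
        rewrite /pred_pos (_ : maxn y.+1.-1 1 = y); [split => //; lia|lia].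
  exists (fun r x y => Ic (Some (Some r)) x y) => cl hcl x y hx hy hxy hb.
  have hin : List.In (trc cl) psi1 by apply/In_cat; left; apply/In_map; exists cl.
  have := HC _ _ hin erefl x y hx hy hxy.
  have hb' : forall l, List.In l (hc_body (trc cl)) -> hlit_sem w Ic x y l.
    move=> l' /In_map [l [hl ->]].
    have := hb l hl; case: (l) => //=.
  move=> /(_ hb') /=.
  case: (hc_head cl) => [r|] // hB.
  have hS : S1 = Some (None, ctxLt c1 (charZ w) (Z.of_nat 1), ctxRt c1 (charZ w) (Z.of_nat (size w))) by rewrite e1 e2.
  apply: hng; rewrite hS -[X in gen _ _ X]slice_full.
  apply: (ext _ x y erefl) => //; [lia|lia|].
  have := HC _ None (Hin_top _ (or_introl erefl)) erefl x y hx hy hxy.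
  apply => l [<-|[]] /=. split => //; lia.
- move=> g; have n1 := gen_nonempty hc1 g.
  split; first by case: (w) n1.
  move=> [I HI].
  have [e1 e2] := ctx_start n1.
  have HI' : forall cl, List.In cl psi1 -> hclause_sem w (liftI I) cl.
    move=> cl /In_cat [/In_map [cl0 [hcl0 ->]]|].
    + move=> x y hx hy hxy hb.
      have := HI cl0 hcl0 x y hx hy hxy (fun l hl => proj1 (trl_sem w I x y l)
                 (hb _ (proj2 (In_map _ _ _) (ex_intro _ l (conj hl erefl))))).
      rewrite /trc /=; by case: (hc_head cl0).
    + move=> [<-|[<-|[<-|[]]]] x y hx hy hxy hb /=.
      * by have [] := hb _ (or_introl erefl).
      * by have [] := hb _ (or_intror (or_introl erefl)).
      * by have [] := hb _ (or_intror (or_introl erefl)).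
  have := sound1 hc1 Hoffs1 HI' g erefl (x := 1) (y := size w) ltac:(lia) (leqnn _) (esym e1) (esym e2) (slice_full w).
  by [].
Qed.
End Dir1.

Theorem theorem3 (Sigma : finType) (L : seq Sigma -> Prop)
    (HL : forall w, L w -> w <> [::]) :
  incl_ESO_HORN L <-> LinConj (fun w => w <> [::] /\ ~ L w).
Proof.
split.
- move=> [R [phi HR]].
  exists (NT Sigma (T1 R) (c1 phi)), (P1 (psi1 phi) (c1 phi)), (S1 phi) => w.
  rewrite -dir1; split.
  + move=> [h1 h2]; split => // hm; apply: h2; apply/HR; split => //.
  + move=> [h1 h2]; split => // hL; apply: h2; exact: (proj2 (proj1 (HR w) hL)).
- move=> [N [P [S HP]]].
  pose eps := fun B => if excluded_middle_informative (gen P B [::]) then true else false.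
  have Heps : forall B, eps B <-> gen P B [::].
    by move=> B; rewrite /eps; case: excluded_middle_informative.
  exists (RT P), (phi2 P S eps) => w.
  split.
  + move=> hL; have wne := HL w hL; split => //.
    apply/(dir2_models S Heps wne) => hg.
    by have [_ []] := proj2 (HP w) hg.
  + move=> [wne hm]; have hng := proj1 (dir2_models S Heps wne) hm.
    apply: NNPP => hL; apply: hng; apply/HP; split => //.
Qed.
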